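(* Let $\mathcal{N}=(N,M_0)$ be a two-level PT-net system with transitions partitioned into low-level $L$ and high-level $H$. Then $\mathcal{N}$ has the property SBNDC if and only if $P(h,l)$ holds for every $h\in H$ and every $l\in L$.
   Context: A PT-net is $N=(P,T,F)$ with $P,T$ finite disjoint and $F:(P\times T)\cup(T\times P)\to\mathbb{N}$; markings $M:P\to\mathbb{N}$; $t$ enabled at $M$ ($M[t\rangle$) iff $M(p)\ge F(p,t)$ for all $p$, firing gives $M'(p)=M(p)+F(t,p)-F(p,t)$ ($M[t\rangle M'$); extended to sequences. Reachable markings are those $M$ with $M_0[s\rangle M$. $N\setminus H$ deletes the transitions of $H$. Two net systems all of whose transitions are observable are weakly bisimilar if there is a relation $R$ between their reachable markings containing the initial pair such that for $(M,M')\in R$ each step $M[t\rangle M''$ is matched by $M'[t\rangle M'''$ with $(M'',M''')\in R$, and symmetrically. SBNDC: for every reachable marking $M_1$ of $\mathcal{N}$ and every $h\in H$, $M_1[h\rangle M_2$ implies that $(N\setminus H,M_1)$ and $(N\setminus H,M_2)$ are weakly bisimilar. For $h\in H$, $l\in L$, $P(h,l)$ holds iff for all words $s\in L^*$ and $w\in(L\cup H)^*$: if $M_0[w\rangle M_1$, $M_1[h\rangle M_2$, $M_1[s\rangle M_3$ and $M_2[s\rangle M_4$, then $M_3[l\rangle$ iff $M_4[l\rangle$. *)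

(* Defs.v *)
From mathcomp Require Import all_boot.
Set Implicit Arguments. Unset Strict Implicit. Unset Printing Implicit Defensive.

(* A PT-net N = (P, T, F): P and T are finite types (hence disjoint), and the
   flow function F is split into F(p,t) = pre p t and F(t,p) = post t p. *)
Record ptnet (P T : finType) := PTNet {
  pre  : P -> T -> nat;
  post : T -> P -> nat
}.

Definition marking (P : finType) := P -> nat.

Section Nets.
Variables (P T : finType) (N : ptnet P T).

Definition enabled (M : marking P) (t : T) : Prop :=
  forall p, pre N p t <= M p.

Definition fire (M : marking P) (t : T) (M' : marking P) : Prop :=
  enabled M t /\ forall p, M' p = M p + post N t p - pre N p t.

Inductive fire_seq : marking P -> seq T -> marking P -> Prop :=
| fs_nil M : fire_seq M [::] M
| fs_cons M t M1 s M2 : fire M t M1 -> fire_seq M1 s M2 -> fire_seq M (t :: s) M2.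

(* two-level net: isH t = t is a high-level transition (t \in H);
   the low-level transitions are L = ~~ isH. *)
Variable isH : pred T.

Definition low_word (s : seq T) : bool := all (fun t => ~~ isH t) s.

(* reachable markings of the system (N \ H, M1): only low transitions fire *)
Definition reach_low (M1 M : marking P) : Prop :=
  exists s, low_word s /\ fire_seq M1 s M.

(* weak bisimilarity of (N \ H, M1) and (N \ H, M2); all transitions of
   N \ H (i.e. those of L) are observable. *)
Definition weak_bisim_low (M1 M2 : marking P) : Prop :=
  exists R : marking P -> marking P -> Prop,
    R M1 M2 /\
    (forall M M', R M M' -> reach_low M1 M /\ reach_low M2 M') /\
    (forall M M', R M M' -> forall t M'', ~~ isH t -> fire M t M'' ->
        exists M''', fire M' t M''' /\ R M'' M''') /\
    (forall M M', R M M' -> forall t M''', ~~ isH t -> fire M' t M''' ->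
        exists M'', fire M t M'' /\ R M'' M''').

Definition SBNDC (M0 : marking P) : Prop :=
  forall M1, (exists w, fire_seq M0 w M1) ->
  forall h M2, isH h -> fire M1 h M2 -> weak_bisim_low M1 M2.

Definition Phl (M0 : marking P) (h l : T) : Prop :=
  forall (s w : seq T) (M1 M2 M3 M4 : marking P),
    low_word s ->
    fire_seq M0 w M1 -> fire M1 h M2 ->
    fire_seq M1 s M3 -> fire_seq M2 s M4 ->
    (enabled M3 l <-> enabled M4 l).

End Nets.

(* Main.v *)
Require Import Defs.
From mathcomp Require Import all_boot.
From Stdlib Require Import FunctionalExtensionality.
Set Implicit Arguments.

Section Aux.
Variables (P T : finType) (N : ptnet P T).

Lemma fire_det (M : marking P) t X Y : fire N M t X -> fire N M t Y -> X = Y.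
Proof.
move=> [_ HX] [_ HY]; apply: functional_extensionality => p.
by rewrite HX HY.
Qed.

Lemma fire_ex (M : marking P) t : enabled N M t -> exists M', fire N M t M'.
Proof.
move=> He; exists (fun p => M p + post N t p - pre N p t); by split.
Qed.

Lemma fire_seq_det (M : marking P) s X Y :
  fire_seq N M s X -> fire_seq N M s Y -> X = Y.
Proof.
move=> H; elim: H Y => [M0 | M0 t M01 s0 M02 Hf Hs IH] Y HY.
  by inversion HY.
inversion HY; subst.
have E : M01 = M2 by apply: (fire_det Hf H2).
  subst M2; exact: IH.
Qed.

Lemma fire_seq_rcons (M : marking P) s X t Y :
  fire_seq N M s X -> fire N X t Y -> fire_seq N M (rcons s t) Y.
Proof.
move=> H; elim: H => [M0 | M0 t0 M01 s0 M02 Hf Hs IH] Hft /=.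
  apply: fs_cons Hft (fs_nil _ _).
apply: fs_cons Hf (IH Hft).
Qed.
End Aux.

Theorem proposition6 (P T : finType) (N : ptnet P T) (isH : pred T)
    (M0 : marking P) :
  SBNDC N isH M0 <->
  (forall h l : T, isH h -> ~~ isH l -> Phl N isH M0 h l).
Proof.
split.
- move=> HS h l Hh Hl s w M1 M2 M3 M4 Hs Hw Hf H3 H4.
  have [R [HR0 [_ [Hfw Hbw]]]] := HS M1 (ex_intro _ w Hw) h M2 Hh Hf.
  have key : forall s M M' X, low_word isH s -> R M M' -> fire_seq N M s X ->
      exists Y, fire_seq N M' s Y /\ R X Y.
    elim=> [|t s' IH] M M' X Hl' HR HX.
      inversion HX; subst; exists M'; split => //; constructor.
    inversion HX as [|? ? X1 ? ? HX1 HXs]; subst.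
    move: Hl' => /= /andP [Ht Hl'].
    have [Y1 [HY1 HR1]] := Hfw _ _ HR _ _ Ht HX1.
    have [Y [HY HRY]] := IH _ _ _ Hl' HR1 HXs.
    exists Y; split => //; exact: fs_cons HY1 HY.
  have [Y [HY HRY]] := key _ _ _ _ Hs HR0 H3.
  have E : Y = M4 by apply: (fire_seq_det HY H4).
  subst Y.
  split.
  + move=> He; have [M'' HM''] := fire_ex He.
    by have [M''' [[He' _] _]] := Hfw _ _ HRY _ _ Hl HM''.
  + move=> He; have [M'' HM''] := fire_ex He.
    by have [M''' [[He' _] _]] := Hbw _ _ HRY _ _ Hl HM''.
- move=> HP M1 [w Hw] h M2 Hh Hf.
  exists (fun M M' => exists s, low_word isH s /\ fire_seq N M1 s M /\ fire_seq N M2 s M').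
  split; first by exists [::]; split => //; split; constructor.
  split; first by move=> M M' [s [Hs [H1 H2]]]; split; exists s.
  split.
  + move=> M M' [s [Hs [H1 H2]]] t M'' Ht Hft.
    have [He _] := Hft.
    have /(fire_ex) [M''' HM'''] : enabled N M' t.
      by apply/(HP h t Hh Ht s w M1 M2 M M' Hs Hw Hf H1 H2).
    exists M'''; split => //; exists (rcons s t); split.
      by rewrite /low_word all_rcons Ht.
    split; [exact: fire_seq_rcons H1 Hft | exact: fire_seq_rcons H2 HM'''].
  + move=> M M' [s [Hs [H1 H2]]] t M''' Ht Hft.
    have [He _] := Hft.
    have /(fire_ex) [M'' HM''] : enabled N M t.
      by apply/(HP h t Hh Ht s w M1 M2 M M' Hs Hw Hf H1 H2).
    exists M''; split => //; exists (rcons s t); split.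
      by rewrite /low_word all_rcons Ht.
    split; [exact: fire_seq_rcons H1 HM'' | exact: fire_seq_rcons H2 Hft].
Qed.
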